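(* Let $m,n\in\mathbb{N}$. For $1\le\ell\le m$ let $r_{\ell},s_{\ell}\in\mathbb{N}_{0}$, $q_{\ell}=e^{-2\pi\sigma_{\ell}}$, $p_{\ell}=e^{-2\pi\tau_{\ell}}$ with $\sigma_{\ell},\tau_{\ell}>0$, let $c_{1,\ell},\dots,c_{r_{\ell},\ell},d_{1,\ell},\dots,d_{s_{\ell},\ell}\in\mathbb{C}$ and a complex sequence $(B_{N,\ell})_{N\in\mathbb{Z}}$ be such that \[ \frac{(c_{1,\ell},\dots,c_{r_{\ell},\ell};q_{\ell},p_{\ell})_{N}}{(d_{1,\ell},\dots,d_{s_{\ell},\ell};q_{\ell},p_{\ell})_{N}}B_{N,\ell}\ge0\quad\text{for all }N\in\mathbb{Z}, \] and let $T_{\ell}\subset\mathbb{C}$ be an open set, symmetric under complex conjugation, such that the series ${}_{r_\ell}G_{s_\ell}$ below converges at $z\overline{w}$ for all $z,w\in T_\ell$. Let $w_{j,\ell}\in T_{\ell}$ for $1\le j\le n$, $1\le\ell\le m$. Then the $n\times n$ matrix \[ \left(\prod_{\ell=1}^{m}{}_{r_{\ell}}G_{s_{\ell}}\left(c_{1,\ell},\dots,c_{r_{\ell},\ell};\,d_{1,\ell},\dots,d_{s_{\ell},\ell};\,q_{\ell},p_{\ell};\,B_{\ell},\,w_{j,\ell}\overline{w_{k,\ell}}\right)\right)_{j,k=1}^{n} \] is positive semidefinite.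
   Context: For $0<p<1$: $(x;p)_\infty=\prod_{k\ge0}(1-xp^k)$, $\theta(x;p)=(x;p)_\infty(p/x;p)_\infty$. The elliptic shifted factorial is $(a;q,p)_N=\prod_{k=0}^{N-1}\theta(aq^{k};p)$ for $N\in\mathbb{N}$, $(a;q,p)_0=1$, $(a;q,p)_N=1/\prod_{k=0}^{-N-1}\theta(aq^{N+k};p)$ for $-N\in\mathbb{N}$, and $(a_1,\dots,a_r;q,p)_N=\prod_i(a_i;q,p)_N$. The bilateral modular series is \[ {}_{r}G_{s}(c_{1},\dots,c_{r};\,d_{1},\dots,d_{s};\,q,p;\,B,\,z)=\sum_{N=-\infty}^{\infty}\frac{(c_{1},\dots,c_{r};q,p)_{N}}{(d_{1},\dots,d_{s};q,p)_{N}}B_{N}z^{N} \] for a sequence $B=(B_N)_{N\in\mathbb{Z}}$. A complex matrix $M=(m_{j,k})$ is positive semidefinite if $\sum_{j,k}m_{j,k}u_j\overline{u_k}\ge0$ for all complex $u_j$. *)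

(* Defs.v *)
From Stdlib Require Import Reals ZArith.
From Coquelicot Require Export Coquelicot.
Open Scope R_scope.

Fixpoint Csum_upto (n : nat) (f : nat -> C) : C :=
  match n with O => RtoC 0 | S n' => Cplus (Csum_upto n' f) (f n') end.
Fixpoint Cprod_upto (n : nat) (f : nat -> C) : C :=
  match n with O => RtoC 1 | S n' => Cmult (Cprod_upto n' f) (f n') end.

(* limit of a complex sequence (meaningful when it converges) *)
Definition Clim (u : nat -> C) : C :=
  @lim (CompleteNormedModule.CompleteSpace _ C_CompleteNormedModule)
       (filtermap u eventually).

Definition qinf (x : C) (p : R) : C :=
  Clim (fun n => Cprod_upto n (fun k => Cminus (RtoC 1) (Cmult x (RtoC (p ^ k))))).

Definition theta (x : C) (p : R) : C :=
  Cmult (qinf x p) (qinf (Cdiv (RtoC p) x) p).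

Definition efac (a : C) (q p : R) (N : Z) : C :=
  match N with
  | Z0 => RtoC 1
  | Zpos _ => Cprod_upto (Z.to_nat N) (fun k => theta (Cmult a (RtoC (q ^ k))) p)
  | Zneg _ => Cinv (Cprod_upto (Z.to_nat (- N))
                 (fun k => theta (Cmult a (RtoC (powerRZ q (N + Z.of_nat k)))) p))
  end.

Definition efacs (r : nat) (a : nat -> C) (q p : R) (N : Z) : C :=
  Cprod_upto r (fun i => efac (a i) q p N).

Definition Cpowz (z : C) (N : Z) : C :=
  match N with
  | Z0 => RtoC 1
  | Zpos _ => Cprod_upto (Z.to_nat N) (fun _ => z)
  | Zneg _ => Cinv (Cprod_upto (Z.to_nat (- N)) (fun _ => z))
  end.

Definition Gterm (r s : nat) (c d : nat -> C) (q p : R) (B : Z -> C) (z : C) (N : Z) : C :=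
  Cmult (Cmult (Cdiv (efacs r c q p N) (efacs s d q p N)) (B N)) (Cpowz z N).

Definition Gconv (r s : nat) (c d : nat -> C) (q p : R) (B : Z -> C) (z : C) : Prop :=
  @ex_series C_AbsRing C_NormedModule (fun k => Gterm r s c d q p B z (Z.of_nat k)) /\
  @ex_series C_AbsRing C_NormedModule (fun k => Gterm r s c d q p B z (- Z.of_nat (S k))).

Definition Gval (r s : nat) (c d : nat -> C) (q p : R) (B : Z -> C) (z : C) : C :=
  Cplus (Clim (fun n => Csum_upto n (fun k => Gterm r s c d q p B z (Z.of_nat k))))
        (Clim (fun n => Csum_upto n (fun k => Gterm r s c d q p B z (- Z.of_nat (S k))))).

Definition Cnonneg (x : C) : Prop := Im x = 0 /\ 0 <= Re x.

(* the n x n complex matrix M (entries M j k, 0 <= j,k < n) is positive semidefinite *)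
Definition psd (n : nat) (M : nat -> nat -> C) : Prop :=
  forall u : nat -> C,
    Cnonneg (Csum_upto n (fun j => Csum_upto n (fun k =>
      Cmult (Cmult (M j k) (u j)) (Cconj (u k))))).

(* Main.v *)
Require Import Defs.
From Stdlib Require Import Reals ZArith Lia Lra Psatz Classical.
From Coquelicot Require Import Coquelicot.
Open Scope R_scope.

Lemma Csum_ext n f g : (forall i, (i < n)%nat -> f i = g i) -> Csum_upto n f = Csum_upto n g.
Proof. induction n; intros H; simpl; auto. rewrite IHn by (intros; apply H; lia). rewrite H by lia; auto. Qed.

Lemma Csum_plus n f g : Csum_upto n (fun i => Cplus (f i) (g i)) = Cplus (Csum_upto n f) (Csum_upto n g).
Proof. induction n; simpl. ring. rewrite IHn. ring. Qed.

Lemma Csum_mult_l n c f : Cmult c (Csum_upto n f) = Csum_upto n (fun i => Cmult c (f i)).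
Proof. induction n; simpl. ring. rewrite <- IHn. ring. Qed.

Lemma Csum_mult_r n c f : Cmult (Csum_upto n f) c = Csum_upto n (fun i => Cmult (f i) c).
Proof. induction n; simpl. ring. rewrite <- IHn. ring. Qed.

Lemma Csum_swap n K f : Csum_upto n (fun i => Csum_upto K (fun t => f i t)) = Csum_upto K (fun t => Csum_upto n (fun i => f i t)).
Proof. induction n; simpl. induction K; simpl; auto. rewrite <- IHK. ring.
rewrite IHn. rewrite <- Csum_plus. auto. Qed.

Lemma Csum_conj n f : Cconj (Csum_upto n f) = Csum_upto n (fun i => Cconj (f i)).
Proof. induction n; simpl. unfold Cconj; simpl. apply injective_projections; simpl; ring.
rewrite Cplus_conj, IHn; auto. Qed.

Lemma Cnonneg_plus a b : Cnonneg a -> Cnonneg b -> Cnonneg (Cplus a b).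
Proof. unfold Cnonneg; destruct a, b; simpl; intros [] []; split; lra. Qed.

Lemma Cnonneg_mult a b : Cnonneg a -> Cnonneg b -> Cnonneg (Cmult a b).
Proof. unfold Cnonneg; destruct a, b; simpl; intros [] []; subst; split. ring. nra. Qed.

Lemma Cnonneg_sum n f : (forall i, (i < n)%nat -> Cnonneg (f i)) -> Cnonneg (Csum_upto n f).
Proof. induction n; intros H; simpl. split; simpl; lra. apply Cnonneg_plus; auto. Qed.

Lemma Cnonneg_zconj z : Cnonneg (Cmult z (Cconj z)).
Proof. destruct z; unfold Cnonneg; simpl; split. ring. nra. Qed.

Definition Qf (n : nat) (M : nat -> nat -> C) (u : nat -> C) : C :=
  Csum_upto n (fun j => Csum_upto n (fun k => Cmult (Cmult (M j k) (u j)) (Cconj (u k)))).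

Lemma psd_ext n M M' : (forall j k, M j k = M' j k) -> psd n M -> psd n M'.
Proof. intros E H u. specialize (H u). erewrite Csum_ext. apply H. intros j _.
apply Csum_ext; intros k _. rewrite E; auto. Qed.

Lemma psd_plus n A B : psd n A -> psd n B -> psd n (fun j k => Cplus (A j k) (B j k)).
Proof. intros HA HB u. specialize (HA u). specialize (HB u).
erewrite Csum_ext. 2:{ intros j _. erewrite Csum_ext. 2:{ intros k _.
 instantiate (1 := fun k => Cplus (Cmult (Cmult (A j k) (u j)) (Cconj (u k))) (Cmult (Cmult (B j k) (u j)) (Cconj (u k)))).
 simpl; ring. } rewrite Csum_plus. reflexivity. }
rewrite Csum_plus. apply Cnonneg_plus; auto. Qed.

Lemma psd_one n : psd n (fun _ _ => RtoC 1).
Proof. intros u. replace (Csum_upto n _) with (Cmult (Csum_upto n u) (Cconj (Csum_upto n u))).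
apply Cnonneg_zconj. rewrite Csum_mult_r. apply Csum_ext; intros j _.
rewrite Csum_conj, Csum_mult_l. apply Csum_ext; intros k _. ring. Qed.

Lemma psd_step n A K b v : psd n A -> (forall t, (t < K)%nat -> Cnonneg (b t)) ->
  psd n (fun j k => Cmult (A j k) (Csum_upto K (fun t => Cmult (b t) (Cmult (v t j) (Cconj (v t k)))))).
Proof. intros HA Hb u.
erewrite Csum_ext. 2:{ intros j _. erewrite Csum_ext. 2:{ intros k _.
  rewrite Csum_mult_l, Csum_mult_r, Csum_mult_r. reflexivity. }
  rewrite Csum_swap. reflexivity. }
rewrite Csum_swap. apply Cnonneg_sum. intros t Ht.
erewrite Csum_ext. 2:{ intros j _. erewrite Csum_ext. 2:{ intros k _.
  instantiate (1 := fun k => Cmult (b t) (Cmult (Cmult (A j k) (Cmult (u j) (v t j))) (Cconj (Cmult (u k) (v t k))))).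
  simpl. rewrite Cmult_conj. ring. }
  rewrite <- Csum_mult_l. reflexivity. }
rewrite <- Csum_mult_l. apply Cnonneg_mult; auto.  Qed.

Lemma Cinv0 : Cinv (RtoC 0) = RtoC 0.
Proof. unfold Cinv; simpl. apply injective_projections; simpl; unfold Rdiv; ring. Qed.

Lemma Cinv_mult_all x y : Cinv (Cmult x y) = Cmult (Cinv x) (Cinv y).
Proof. destruct (classic (x = RtoC 0)) as [->|Hx].
 rewrite Cmult_0_l, Cinv0, Cmult_0_l; auto.
 destruct (classic (y = RtoC 0)) as [->|Hy].
 rewrite Cmult_0_r, Cinv0, Cmult_0_r; auto.
 field. auto. Qed.

Lemma Cinv_conj_all a : Cconj (Cinv a) = Cinv (Cconj a).
Proof. destruct (classic (a = RtoC 0)) as [->|Ha].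
 rewrite Cinv0. unfold Cconj; simpl. rewrite Ropp_0. change (0,0) with (RtoC 0). rewrite Cinv0; auto.
 apply Cinv_conj; auto. Qed.

Lemma Cprod_cmult K a b : Cprod_upto K (fun _ => Cmult a b) = Cmult (Cprod_upto K (fun _ => a)) (Cprod_upto K (fun _ => b)).
Proof. induction K; simpl. ring. rewrite IHK; ring. Qed.

Lemma Cprod_cconj K a : Cprod_upto K (fun _ => Cconj a) = Cconj (Cprod_upto K (fun _ => a)).
Proof. induction K; simpl. unfold Cconj; simpl; apply injective_projections; simpl; ring.
rewrite IHK, Cmult_conj; auto. Qed.

Lemma Cpowz_mult a b N : Cpowz (Cmult a b) N = Cmult (Cpowz a N) (Cpowz b N).
Proof. destruct N; simpl. ring. apply Cprod_cmult. rewrite Cprod_cmult, Cinv_mult_all; auto. Qed.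

Lemma Cpowz_conj a N : Cpowz (Cconj a) N = Cconj (Cpowz a N).
Proof. destruct N; simpl. unfold Cconj; simpl; apply injective_projections; simpl; ring.
apply Cprod_cconj. rewrite Cprod_cconj, Cinv_conj_all; auto. Qed.

Lemma Gterm_split r s c d q p B z v N :
  Gterm r s c d q p B (Cmult z (Cconj v)) N =
  Cmult (Cmult (Cdiv (efacs r c q p N) (efacs s d q p N)) (B N)) (Cmult (Cpowz z N) (Cconj (Cpowz v N))).
Proof. unfold Gterm. rewrite Cpowz_mult, Cpowz_conj; auto. Qed.

Lemma lim_mult {T} (F : (T -> Prop) -> Prop) {FF : Filter F} f g a b :
  filterlim f F (locally a) -> filterlim g F (locally b) ->
  filterlim (fun x => Cmult (f x) (g x)) F (@locally C_UniformSpace (Cmult a b)).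
Proof. intros Hf Hg.
assert (Hf' : filterlim f F (@locally (AbsRing_UniformSpace C_AbsRing) a)).
{ intros P HP. apply Hf. apply locally_C. exact HP. }
exact (filterlim_comp_2 f g (fun x y => @scal C_AbsRing C_NormedModule x y) Hf' Hg
  (@filterlim_scal C_AbsRing C_NormedModule a b)). Qed.

Lemma lim_plus {T} (F : (T -> Prop) -> Prop) {FF : Filter F} f g a b :
  filterlim f F (locally a) -> filterlim g F (locally b) ->
  filterlim (fun x => Cplus (f x) (g x)) F (@locally C_UniformSpace (Cplus a b)).
Proof. intros Hf Hg. apply (filterlim_comp_2 f g (fun x y => Cplus x y) Hf Hg).
exact (@filterlim_plus C_AbsRing C_NormedModule a b). Qed.

Lemma lim_sum {T} (F : (T -> Prop) -> Prop) {FF : Filter F} n (f : T -> nat -> C) g :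
  (forall i, (i < n)%nat -> filterlim (fun x => f x i) F (locally (g i))) ->
  filterlim (fun x => Csum_upto n (f x)) F (@locally C_UniformSpace (Csum_upto n g)).
Proof. induction n; intros H; simpl. apply filterlim_const.
apply lim_plus; auto. Qed.

Lemma lim_prod {T} (F : (T -> Prop) -> Prop) {FF : Filter F} n (f : T -> nat -> C) g :
  (forall i, (i < n)%nat -> filterlim (fun x => f x i) F (locally (g i))) ->
  filterlim (fun x => Cprod_upto n (f x)) F (@locally C_UniformSpace (Cprod_upto n g)).
Proof. induction n; intros H; simpl. apply filterlim_const.
apply lim_mult; auto. Qed.

Lemma sum_n_Csum (f : nat -> C) N : @sum_n C_NormedModule f N = Csum_upto (S N) f.
Proof. induction N. rewrite sum_O; simpl. ring. rewrite sum_Sn, IHN. simpl. reflexivity. Qed.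

Lemma Clim_eq u l : filterlim u eventually (@locally C_UniformSpace l) -> Clim u = l.
Proof. intros H. unfold Clim.
pose (CS := CompleteNormedModule.CompleteSpace _ C_CompleteNormedModule).
change (@lim CS (filtermap u eventually) = l).
set (F := (filtermap u eventually : (CS -> Prop) -> Prop)).
assert (PF: ProperFilter F) by (apply filtermap_proper_filter; apply eventually_filter).
assert (Hc: @cauchy CS F). { intros eps. exists l. apply H. apply locally_ball. }
assert (Hcl : forall e : posreal, @ball CS (@lim CS F) e l).
{ intros eps.
pose proof (complete_cauchy F PF Hc (pos_div_2 eps)) as H1.
assert (H2 : F (ball l (pos_div_2 eps))) by (apply H; apply locally_ball).
destruct (filter_ex _ (filter_and _ _ H1 H2)) as [y [Hy1 Hy2]].
replace (pos eps) with (pos (pos_div_2 eps) + pos (pos_div_2 eps)) by (simpl; lra).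
eapply ball_triangle. exact Hy1. apply ball_sym. exact Hy2. }
apply (@is_filter_lim_locally_unique C_AbsRing C_NormedModule).
intros P [eps HP]. exists (pos_div_2 eps). intros z Hz. apply HP.
replace (pos eps) with (pos (pos_div_2 eps) + pos (pos_div_2 eps)) by (simpl; lra).
eapply ball_triangle. apply ball_sym, Hcl. exact Hz. Qed.

Lemma series_lim f : @ex_series C_AbsRing C_NormedModule f ->
  filterlim (fun M => Csum_upto M f) eventually (@locally C_UniformSpace (Clim (fun M => Csum_upto M f))).
Proof. intros [l Hl].
assert (Hs : filterlim (fun M => Csum_upto M f) eventually (@locally C_UniformSpace l)).
{ intros P HP. destruct (Hl P HP) as [N HN]. exists (S N). intros M HM.
  destruct M; [lia|]. rewrite <- sum_n_Csum. apply HN; lia. }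
rewrite (Clim_eq _ _ Hs). exact Hs. Qed.

Lemma nonneg_lim u l : (forall M, Cnonneg (u M)) -> filterlim u eventually (@locally C_UniformSpace l) -> Cnonneg l.
Proof. intros Hu H.
assert (Hb : forall eps : posreal, exists M, Rabs (fst (u M) - fst l) < eps /\ Rabs (snd (u M) - snd l) < eps).
{ intros eps. destruct (H _ (locally_ball l eps)) as [N HN]. exists N.
  destruct (HN N (le_n N)) as [H1 H2]. split; [exact H1|exact H2]. }
split.
- destruct (Req_dec (Im l) 0) as [E|E]; auto. exfalso.
  assert (Hp : 0 < Rabs (Im l)) by (apply Rabs_pos_lt; auto).
  destruct (Hb (mkposreal _ Hp)) as [M [_ H2]]. simpl in H2. destruct (Hu M) as [Hi _].
  unfold Im in *. rewrite Hi in H2. rewrite Rminus_0_l, Rabs_Ropp in H2. lra.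
- destruct (Rle_lt_dec 0 (Re l)) as [E|E]; auto. exfalso.
  assert (Hp : 0 < - Re l) by lra.
  destruct (Hb (mkposreal _ Hp)) as [M [H1 _]]. simpl in H1. destruct (Hu M) as [_ Hr].
  unfold Re in *. apply Rabs_def2 in H1. lra. Qed.

Theorem mainTheorem17
  (m n : nat) (Hm : (1 <= m)%nat) (Hn : (1 <= n)%nat)
  (r s : nat -> nat) (sigma tau : nat -> R)
  (c d : nat -> nat -> C) (B : nat -> Z -> C)
  (T : nat -> C -> Prop) (w : nat -> nat -> C)
  (Hst : forall l, (l < m)%nat -> 0 < sigma l /\ 0 < tau l)
  (Hpos : forall l N, (l < m)%nat ->
     Cnonneg (Cmult (Cdiv (efacs (r l) (c l) (exp (-2 * PI * sigma l)) (exp (-2 * PI * tau l)) N)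
                          (efacs (s l) (d l) (exp (-2 * PI * sigma l)) (exp (-2 * PI * tau l)) N))
                    (B l N)))
  (Hopen : forall l, (l < m)%nat -> @open C_UniformSpace (T l))
  (Hsym : forall l z, (l < m)%nat -> T l z -> T l (Cconj z))
  (Hconv : forall l z v, (l < m)%nat -> T l z -> T l v ->
     Gconv (r l) (s l) (c l) (d l) (exp (-2 * PI * sigma l)) (exp (-2 * PI * tau l))
           (B l) (Cmult z (Cconj v)))
  (Hw : forall j l, (j < n)%nat -> (l < m)%nat -> T l (w j l)) :
  psd n (fun j k => Cprod_upto m (fun l =>
     Gval (r l) (s l) (c l) (d l) (exp (-2 * PI * sigma l)) (exp (-2 * PI * tau l))
          (B l) (Cmult (w j l) (Cconj (w k l))))).
Proof.
set (q := fun l => exp (-2 * PI * sigma l)).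
set (p := fun l => exp (-2 * PI * tau l)).
set (a := fun l N => Cmult (Cdiv (efacs (r l) (c l) (q l) (p l) N) (efacs (s l) (d l) (q l) (p l) N)) (B l N)).
set (Sl := fun M l j k =>
  Cplus (Csum_upto M (fun t => Gterm (r l) (s l) (c l) (d l) (q l) (p l) (B l) (Cmult (w j l) (Cconj (w k l))) (Z.of_nat t)))
        (Csum_upto M (fun t => Gterm (r l) (s l) (c l) (d l) (q l) (p l) (B l) (Cmult (w j l) (Cconj (w k l))) (- Z.of_nat (S t))%Z))).
assert (HA : forall M L, (L <= m)%nat -> psd n (fun j k => Cprod_upto L (fun l => Sl M l j k))).
{ intros M L. induction L; intros HL.
  - apply (psd_ext n (fun _ _ => RtoC 1)). intros; reflexivity. apply psd_one.
  - set (A := fun j k => Cprod_upto L (fun l => Sl M l j k)).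
    apply psd_ext with (M := fun j k => Cplus
      (Cmult (A j k) (Csum_upto M (fun t => Cmult (a L (Z.of_nat t)) (Cmult (Cpowz (w j L) (Z.of_nat t)) (Cconj (Cpowz (w k L) (Z.of_nat t)))))))
      (Cmult (A j k) (Csum_upto M (fun t => Cmult (a L (- Z.of_nat (S t))%Z) (Cmult (Cpowz (w j L) (- Z.of_nat (S t))%Z) (Cconj (Cpowz (w k L) (- Z.of_nat (S t))%Z))))))).
    + intros j k. simpl. unfold Sl, A. rewrite <- Cmult_plus_distr_l. f_equal. f_equal.
      * apply Csum_ext; intros t _. rewrite Gterm_split. reflexivity.
      * apply Csum_ext; intros t _. rewrite Gterm_split. reflexivity.
    + apply psd_plus; apply psd_step; try (apply IHL; lia); intros t _; apply Hpos; lia. }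
assert (HB : forall j k, (j < n)%nat -> (k < n)%nat ->
  filterlim (fun M => Cprod_upto m (fun l => Sl M l j k)) eventually
    (@locally C_UniformSpace (Cprod_upto m (fun l =>
     Gval (r l) (s l) (c l) (d l) (q l) (p l) (B l) (Cmult (w j l) (Cconj (w k l))))))).
{ intros j k Hj Hk. apply lim_prod; [apply eventually_filter|]. intros l Hl. unfold Sl, Gval.
  destruct (Hconv l (w j l) (w k l) Hl (Hw j l Hj Hl) (Hw k l Hk Hl)) as [H1 H2].
  apply lim_plus; [apply eventually_filter| |]; apply series_lim; assumption. }
intros u. change (Cnonneg (Qf n (fun j k => Cprod_upto m (fun l =>
     Gval (r l) (s l) (c l) (d l) (q l) (p l) (B l) (Cmult (w j l) (Cconj (w k l))))) u)).
apply (nonneg_lim (fun M => Qf n (fun j k => Cprod_upto m (fun l => Sl M l j k)) u)).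
- intros M. apply (HA M m (le_n m)).
- unfold Qf. apply lim_sum; [apply eventually_filter|intros j Hj].
  apply lim_sum; [apply eventually_filter|intros k Hk].
  apply lim_mult; [apply eventually_filter| |apply filterlim_const].
  apply lim_mult; [apply eventually_filter|apply HB; auto|apply filterlim_const].
Qed.
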